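(* Consider a translation-invariant, nearest-neighbor, frustration free quantum spin chain as described in the context, and let $m,n\ge1$. The Hermitian operator $K(-m,n)=G(-m,0)\,G(0,n)\,G(-m,0)$ (acting on $\mathcal{H}_{[-m,n]}$) has range contained in $\mathcal{G}(-m,0)\otimes\mathcal{G}(1,n)$; its eigenspace for eigenvalue $1$ is exactly $\mathcal{G}(-m,n)$; and $\varepsilon(m,n)$ equals the largest eigenvalue of $K(-m,n)$ that is less than $1$.
   Context: For each $x\in\mathbb{Z}$, $\mathcal{H}_x=\mathbb{C}^d$, $\mathcal{H}_\Lambda=\bigotimes_{x\in\Lambda}\mathcal{H}_x$. A fixed positive operator $h$ on $\mathbb{C}^d\otimes\mathbb{C}^d$ gives $h(x,x+1)$ on sites $x,x+1$; $H(c,d)=\sum_{x=c}^{d-1}h(x,x+1)$ for $c\le d$ (extended by the identity to larger intervals, $H(c,c)=0$). Frustration free: $\mathcal{G}(c,d):=\operatorname{Ker}H(c,d)\ne\{0\}$ for every interval $[c,d]$; here $\mathcal{G}(c,d)$ for the interval $[c,d]$ is regarded as a subspace of $\mathcal{H}_{[c,d]}$ when written in tensor products, and $G(c,d)$ is the orthogonal projection onto $\operatorname{Ker}H(c,d)$ (with $G(c,c)=1$). $\varepsilon(m,n)=\sup\{\langle\psi,G(0,n)\psi\rangle:\psi\in\mathcal{G}(-m,0),\ \psi\perp\mathcal{G}(-m,n),\ \|\psi\|=1\}$, computed in $\mathcal{H}_{[-m,n]}$. *)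

(* Defs.v *)
From HB Require Import structures.
From mathcomp Require Import all_boot all_order all_algebra.
From mathcomp Require Import classical_sets reals.
From mathcomp.real_closed Require Import complex mxtens.

Unset Strict Implicit.
Unset Printing Implicit Defensive.

Import Order.TTheory GRing.Theory Num.Theory.
Local Open Scope ring_scope.

(* Conventions:
   - scalars: C = R[i] with R : realType (a model of the complex numbers);
   - the chain on L consecutive sites has Hilbert space C^(d^L), tensor
     products are Kronecker products [tensmx] (mathcomp real_closed/mxtens);
   - vectors are row vectors, an operator A acts by  v |-> v *m A
     (mathcomp's row convention, so kernels are [kermx], ranges are row
     spaces, eigenspaces are [eigenspace]);
   - inner product: [dotmx u v = (u *m v^t* ) 0 0] (spectral.v). *)

Section Chain.
Variable R : realType.
Local Notation C := (R[i]).
Variable d : nat.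
Variable h : 'M[C]_(d ^ 2).

(* A placed on k consecutive sites with a sites to its left and b to its right,
   inside a chain of N = a + k + b sites (identity elsewhere).  [conform_mx]
   only performs the dimension cast d^a * d^k * d^b = d^N; in every use below
   a + k + b = N holds, so it is exactly  1 (x) A (x) 1. *)
Definition embed (a k b N : nat) (A : 'M[C]_(d ^ k)) : 'M[C]_(d ^ N) :=
  conform_mx 0 ((1%:M : 'M[C]_(d ^ a)) *t A *t (1%:M : 'M[C]_(d ^ b))).

(* H on an interval of L sites (translation invariance: it only depends on L),
   sites numbered 0..L-1:  sum_{x=0}^{L-2} h(x,x+1). *)
Definition Ham (L : nat) : 'M[C]_(d ^ L) :=
  \sum_(x < L.-1) embed x 2 (L - x - 2) L h.

Definition Gspace (L : nat) : 'M[C]_(d ^ L) := kermx (Ham L).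

Definition Gproj (L : nat) : 'M[C]_(d ^ L) := proj_ortho (Gspace L).

Definition tens_sp (a b N : nat) (S : 'M[C]_(d ^ a)) (T : 'M[C]_(d ^ b))
  : 'M[C]_(d ^ N) := conform_mx 0 (S *t T).

(* Interval [-m, n] has m + n + 1 sites; site -m is numbered 0, site 0 is m. *)
Definition G_left (m n : nat) : 'M[C]_(d ^ (m + n + 1)) :=
  embed 0 m.+1 n (m + n + 1) (Gproj m.+1).
Definition G_right (m n : nat) : 'M[C]_(d ^ (m + n + 1)) :=
  embed m n.+1 0 (m + n + 1) (Gproj n.+1).

Definition Kop (m n : nat) : 'M[C]_(d ^ (m + n + 1)) :=
  G_left m n *m G_right m n *m G_left m n.

(* epsilon(m,n) = sup { <psi, G(0,n) psi> : psi in G(-m,0) (i.e. in the kernel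
   of H(-m,0) computed in H_[-m,n]), psi orthogonal to G(-m,n), ||psi|| = 1 }. *)
Definition eps (m n : nat) : R :=
  sup [set x : R | exists psi : 'rV[C]_(d ^ (m + n + 1)),
         [/\ psi *m embed 0 m.+1 n (m + n + 1) (Ham m.+1) = 0,
             (forall phi : 'rV[C]_(d ^ (m + n + 1)),
                 (phi <= Gspace (m + n + 1))%MS -> dotmx psi phi = 0),
             dotmx psi psi = 1
           & (x%:C)%C = dotmx (psi *m G_right m n) psi]].

End Chain.

Arguments embed {R d} a k b N A.
Arguments Ham {R d} h L.
Arguments Gspace {R d} h L.
Arguments Gproj {R d} h L.
Arguments tens_sp {R d a b} N S T.
Arguments G_left {R d} h m n.
Arguments G_right {R d} h m n.
Arguments Kop {R d} h m n.
Arguments eps {R d} h m n.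

Definition positive_op {R : realType} {N : nat} (A : 'M[R[i]]_N) : Prop :=
  forall v : 'rV[R[i]]_N, 0 <= dotmx (v *m A) v.

(* Frustration freeness: Ker H(c,d) <> {0} for every interval [c,d], c <= d,
   i.e. for every number L >= 1 of sites. *)
Definition frustration_free {R : realType} {d : nat} (h : 'M[R[i]]_(d ^ 2))
  : Prop := forall L : nat, (0 < L)%N -> Gspace h L != 0.

Definition largest_eig_below1 {R : realType} {N : nat} (A : 'M[R[i]]_N)
  (lam : R[i]) : Prop :=
  [/\ eigenvalue A lam, lam < 1 &
      forall mu : R[i], eigenvalue A mu -> mu < 1 -> mu <= lam].

(* Main.v *)
Require Import Defs.
From HB Require Import structures.
From mathcomp Require Import all_boot all_order all_algebra.
From mathcomp Require Import classical_sets reals.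
From mathcomp.real_closed Require Import complex mxtens.
Import Order.TTheory GRing.Theory Num.Theory.
Local Open Scope ring_scope.
From HB Require Import structures.
From mathcomp Require Import all_boot all_order all_algebra.
From mathcomp Require Import classical_sets reals.
From mathcomp.real_closed Require Import complex mxtens.
From mathcomp Require Import sesquilinear spectral.
From mathcomp Require Import zify ring boolp.
Set Implicit Arguments.
Unset Strict Implicit.
Unset Printing Implicit Defensive.
Import Order.TTheory GRing.Theory Num.Theory.
Local Open Scope ring_scope.
Local Open Scope sesquilinear_scope.

Local Close Scope sesquilinear_scope.
Section Conform.
Variable R : pzRingType.

Lemma cf_castE p q p' q' (e : (p = p') * (q = q')) (A : 'M[R]_(p,q)) :
  castmx e A = conform_mx (0 : 'M_(p',q')) A.
Proof. by rewrite -(conform_mx_id (0 : 'M_(p',q')) (castmx e A)) conform_castmx. Qed.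

Lemma cf_mul p q r p' q' r' (A : 'M[R]_(p,q)) (B : 'M[R]_(q,r)) :
  p = p' -> q = q' -> r = r' ->
  conform_mx (0 : 'M_(p',r')) (A *m B) =
  conform_mx (0 : 'M_(p',q')) A *m conform_mx (0 : 'M_(q',r')) B.
Proof. by move=> e1 e2 e3; subst; rewrite !conform_mx_id. Qed.

Lemma cf_add p q p' q' (A B : 'M[R]_(p,q)) :
  p = p' -> q = q' ->
  conform_mx (0 : 'M_(p',q')) (A + B) =
  conform_mx (0 : 'M_(p',q')) A + conform_mx (0 : 'M_(p',q')) B.
Proof. by move=> e1 e2; subst; rewrite !conform_mx_id. Qed.

Lemma cf_opp p q p' q' (A : 'M[R]_(p,q)) :
  p = p' -> q = q' ->
  conform_mx (0 : 'M_(p',q')) (- A) = - conform_mx (0 : 'M_(p',q')) A.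
Proof. by move=> e1 e2; subst; rewrite !conform_mx_id. Qed.

Lemma cf_sum p q p' q' (k : nat) (F : 'I_k -> 'M[R]_(p,q)) :
  p = p' -> q = q' ->
  conform_mx (0 : 'M_(p',q')) (\sum_(i < k) F i) =
  \sum_(i < k) conform_mx (0 : 'M_(p',q')) (F i).
Proof. by move=> e1 e2; subst; rewrite !conform_mx_id; apply: eq_bigr => i _; rewrite conform_mx_id. Qed.

Lemma cf_cf p q p' q' p'' q'' (A : 'M[R]_(p,q)) :
  p = p' -> q = q' ->
  conform_mx (0 : 'M_(p'',q'')) (conform_mx (0 : 'M_(p',q')) A) =
  conform_mx (0 : 'M_(p'',q'')) A.
Proof. by move=> e1 e2; subst; rewrite conform_mx_id. Qed.

Lemma cf_1 p p' : p = p' ->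
  conform_mx (0 : 'M[R]_p') (1%:M : 'M_p) = 1%:M.
Proof. by move=> e; subst; rewrite conform_mx_id. Qed.

Lemma cf_0 p q p' q' : conform_mx (0 : 'M[R]_(p',q')) (0 : 'M_(p,q)) = 0.
Proof.
case: (eqVneq p p') => [e|ne]; last by rewrite nonconform_mx ?ne.
case: (eqVneq q q') => [f|nf]; last by rewrite nonconform_mx ?nf ?orbT.
by subst; rewrite conform_mx_id.
Qed.

Lemma cf_inj p q p' q' (A : 'M[R]_(p,q)) :
  p = p' -> q = q' -> conform_mx (0 : 'M_(p',q')) A = 0 -> A = 0.
Proof. by move=> e1 e2; subst; rewrite conform_mx_id. Qed.

Lemma cf_tl p q p' q' r s (A : 'M[R]_(p,q)) (B : 'M[R]_(r,s)) :
  p = p' -> q = q' ->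
  (conform_mx (0 : 'M_(p',q')) A) *t B = conform_mx (0 : 'M_(p' * r, q' * s)) (A *t B).
Proof. by move=> e1 e2; subst; rewrite !conform_mx_id. Qed.

Lemma cf_tr p q p' q' r s (A : 'M[R]_(p,q)) (B : 'M[R]_(r,s)) :
  p = p' -> q = q' ->
  B *t (conform_mx (0 : 'M_(p',q')) A) = conform_mx (0 : 'M_(r * p', s * q')) (B *t A).
Proof. by move=> e1 e2; subst; rewrite !conform_mx_id. Qed.

Lemma cf_tr_mx p q p' q' (A : 'M[R]_(p,q)) :
  p = p' -> q = q' ->
  (conform_mx (0 : 'M_(p',q')) A)^T = conform_mx (0 : 'M_(q',p')) A^T.
Proof. by move=> e1 e2; subst; rewrite !conform_mx_id. Qed.

Lemma cf_map (f : R -> R) p q p' q' (A : 'M[R]_(p,q)) :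
  p = p' -> q = q' -> f 0 = 0 ->
  map_mx f (conform_mx (0 : 'M_(p',q')) A) = conform_mx (0 : 'M_(p',q')) (map_mx f A).
Proof. by move=> e1 e2 _; subst; rewrite !conform_mx_id. Qed.

End Conform.

Section Tens.
Variable R : comPzRingType.

Lemma mxtens_index_inj m n : injective (@mxtens_index m n).
Proof. exact: can_inj (@mxtens_indexK m n). Qed.

Lemma tens1mx p q : (1%:M : 'M[R]_p) *t (1%:M : 'M[R]_q) = 1%:M.
Proof.
apply/matrixP => i j.
case: (mxtens_indexP i) => i1 i2; case: (mxtens_indexP j) => j1 j2.
rewrite tensmxE !mxE (inj_eq (@mxtens_index_inj _ _)) xpair_eqE.
by case: (i1 == j1); case: (i2 == j2); rewrite /= ?mulr1 ?mul0r ?mulr0.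
Qed.

Lemma tensmxDl m n p q (A B : 'M[R]_(m,n)) (C : 'M[R]_(p,q)) :
  (A + B) *t C = A *t C + B *t C.
Proof. by apply/matrixP => i j; rewrite !mxE mulrDl. Qed.

Lemma tensmxDr m n p q (A : 'M[R]_(m,n)) (B C : 'M[R]_(p,q)) :
  A *t (B + C) = A *t B + A *t C.
Proof. by apply/matrixP => i j; rewrite !mxE mulrDr. Qed.

Lemma tensmxNl m n p q (A : 'M[R]_(m,n)) (C : 'M[R]_(p,q)) :
  (- A) *t C = - (A *t C).
Proof. by apply/matrixP => i j; rewrite !mxE mulNr. Qed.

Lemma tensmxNr m n p q (A : 'M[R]_(m,n)) (C : 'M[R]_(p,q)) :
  A *t (- C) = - (A *t C).
Proof. by apply/matrixP => i j; rewrite !mxE mulrN. Qed.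

Lemma tensmx_suml m n p q k (F : 'I_k -> 'M[R]_(m,n)) (C : 'M[R]_(p,q)) :
  (\sum_(i < k) F i) *t C = \sum_(i < k) (F i *t C).
Proof.
elim/big_ind2: _ => //; first by rewrite tens0mx.
by move=> x1 x2 y1 y2 <- <-; rewrite tensmxDl.
Qed.

Lemma tensmx_sumr m n p q k (F : 'I_k -> 'M[R]_(m,n)) (C : 'M[R]_(p,q)) :
  C *t (\sum_(i < k) F i) = \sum_(i < k) (C *t F i).
Proof.
elim/big_ind2: _ => //; first by rewrite tensmx0.
by move=> x1 x2 y1 y2 <- <-; rewrite tensmxDr.
Qed.

Lemma tensmxA m1 n1 m2 n2 m3 n3 (A : 'M[R]_(m1,n1)) (B : 'M[R]_(m2,n2))
   (C : 'M[R]_(m3,n3)) :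
  (A *t B) *t C = castmx (mulnA _ _ _, mulnA _ _ _) (A *t (B *t C)).
Proof.
apply/matrixP => i j.
case: (mxtens_indexP i) => i12 i3; case: (mxtens_indexP i12) => i1 i2.
case: (mxtens_indexP j) => j12 j3; case: (mxtens_indexP j12) => j1 j2.
rewrite !tensmxE castmxE /=.
have -> : cast_ord (esym (mulnA m1 m2 m3)) (mxtens_index (mxtens_index (i1, i2), i3))
   = mxtens_index (i1, mxtens_index (i2, i3)).
  by apply: val_inj => /=; rewrite mulnDl -mulnA addnA.
have -> : cast_ord (esym (mulnA n1 n2 n3)) (mxtens_index (mxtens_index (j1, j2), j3))
   = mxtens_index (j1, mxtens_index (j2, j3)).
  by apply: val_inj => /=; rewrite mulnDl -mulnA addnA.
by rewrite !tensmxE mulrA.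
Qed.

Lemma tensmxA' m1 n1 m2 n2 m3 n3 (A : 'M[R]_(m1,n1)) (B : 'M[R]_(m2,n2))
   (C : 'M[R]_(m3,n3)) :
  A *t (B *t C) = castmx (esym (mulnA _ _ _), esym (mulnA _ _ _)) ((A *t B) *t C).
Proof. by rewrite tensmxA castmxK. Qed.

End Tens.

Section TensF.
Variable F : fieldType.
Lemma tens_sub m1 m2 n1 p1 p2 n2 (A : 'M[F]_(m1,n1)) (S : 'M[F]_(p1,n1))
  (B : 'M[F]_(m2,n2)) (T : 'M[F]_(p2,n2)) :
  (A <= S)%MS -> (B <= T)%MS -> (A *t B <= S *t T)%MS.
Proof.
move=> sAS sBT; rewrite -(mulmxKpV sAS) -(mulmxKpV sBT) -tensmx_mul.
exact: submxMl.
Qed.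
Lemma cf_sub p q p' q' (A B : 'M[F]_(p,q)) : p = p' -> q = q' -> (A <= B)%MS ->
  (conform_mx (0 : 'M_(p', q')) A <= conform_mx (0 : 'M_(p',q')) B)%MS.
Proof. by move=> e1 e2; subst; rewrite !conform_mx_id. Qed.
End TensF.

Local Open Scope sesquilinear_scope.
Lemma tens_adj (C : numClosedFieldType) m n p q (A : 'M[C]_(m,n)) (B : 'M[C]_(p,q)) :
  (A *t B)^t* = A^t* *t B^t*.
Proof. by rewrite trmx_tens map_mxT. Qed.

Ltac dims := rewrite -?expnD; congr (expn _ _); lia.

Section Embed.
Variables (R : realType) (d : nat).
Local Notation C := (R[i]).

Lemma E_mul a k b N (X Y : 'M[C]_(d ^ k)) : (a + k + b = N)%N ->
  embed a k b N (X *m Y) = embed a k b N X *m embed a k b N Y.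
Proof.
move=> e; rewrite /embed -cf_mul; try dims.
by rewrite !tensmx_mul !mulmx1.
Qed.

Lemma E_add a k b N (X Y : 'M[C]_(d ^ k)) : (a + k + b = N)%N ->
  embed a k b N (X + Y) = embed a k b N X + embed a k b N Y.
Proof. by move=> e; rewrite /embed tensmxDr tensmxDl cf_add //; dims. Qed.

Lemma E_opp a k b N (X : 'M[C]_(d ^ k)) : (a + k + b = N)%N ->
  embed a k b N (- X) = - embed a k b N X.
Proof. by move=> e; rewrite /embed tensmxNr tensmxNl cf_opp //; dims. Qed.

Lemma E_sub a k b N (X Y : 'M[C]_(d ^ k)) : (a + k + b = N)%N ->
  embed a k b N (X - Y) = embed a k b N X - embed a k b N Y.
Proof. by move=> e; rewrite E_add // E_opp. Qed.

Lemma E_sum a k b N n (F : 'I_n -> 'M[C]_(d ^ k)) : (a + k + b = N)%N ->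
  embed a k b N (\sum_(i < n) F i) = \sum_(i < n) embed a k b N (F i).
Proof. by move=> e; rewrite /embed tensmx_sumr tensmx_suml cf_sum //; dims. Qed.

Lemma E_1 a k b N : (a + k + b = N)%N ->
  embed a k b N (1%:M : 'M[C]_(d ^ k)) = 1%:M.
Proof. by move=> e; rewrite /embed !tens1mx cf_1 //; dims. Qed.

Lemma E_0 a k b N : embed a k b N (0 : 'M[C]_(d ^ k)) = 0.
Proof. by rewrite /embed tensmx0 tens0mx cf_0. Qed.

Lemma E_adj a k b N (X : 'M[C]_(d ^ k)) : (a + k + b = N)%N ->
  embed a k b N (X^t* ) = (embed a k b N X)^t*.
Proof.
move=> e; rewrite /embed cf_tr_mx; try dims.
rewrite cf_map ?conjC0 //; try dims.
by rewrite !tens_adj !trmx1 !map_mx1.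
Qed.

Lemma E_comp a k b N x j y a' b' (X : 'M[C]_(d ^ j)) :
  (a + k + b = N)%N -> (x + j + y = k)%N -> a' = (a + x)%N -> b' = (y + b)%N ->
  embed a k b N (embed x j y k X) = embed a' j b' N X.
Proof.
move=> e1 e2 e3 e4; rewrite /embed.
have -> : (1%:M : 'M[C]_(d ^ a')) = conform_mx 0 ((1%:M : 'M[C]_(d^a)) *t (1%:M : 'M[C]_(d^x))).
  by rewrite tens1mx cf_1 //; dims.
have -> : (1%:M : 'M[C]_(d ^ b')) = conform_mx 0 ((1%:M : 'M[C]_(d^y)) *t (1%:M : 'M[C]_(d^b))).
  by rewrite tens1mx cf_1 //; dims.
rewrite ?(cf_tl, cf_tr, cf_cf); try dims.
rewrite !tensmxA' !cf_castE.
by rewrite ?(cf_tl, cf_tr, cf_cf); try dims.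
Qed.

Lemma E_inj a k b N (X : 'M[C]_(d ^ k)) : (0 < d)%N -> (a + k + b = N)%N ->
  embed a k b N X = 0 -> X = 0.
Proof.
move=> d0 e /cf_inj => /(_ ltac:(dims) ltac:(dims)) H.
apply/matrixP => i j; rewrite mxE.
have da : (0 < d ^ a)%N by rewrite expn_gt0 d0.
have db : (0 < d ^ b)%N by rewrite expn_gt0 d0.
have /matrixP /(_ (mxtens_index (mxtens_index (Ordinal da, i), Ordinal db))
        (mxtens_index (mxtens_index (Ordinal da, j), Ordinal db))) := H.
by rewrite !tensmxE !mxE !eqxx !mulr1 mul1r.
Qed.

Lemma E_left k b N (X : 'M[C]_(d ^ k)) : (k + b = N)%N ->
  embed 0 k b N X = conform_mx 0 (X *t (1%:M : 'M[C]_(d ^ b))).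
Proof.
move=> e; rewrite /embed tens_scalar1mx cf_castE.
by rewrite ?(cf_tl, cf_tr, cf_cf); try dims.
Qed.

Lemma E_right a k N (X : 'M[C]_(d ^ k)) : (a + k = N)%N ->
  embed a k 0 N X = conform_mx 0 ((1%:M : 'M[C]_(d ^ a)) *t X).
Proof.
move=> e; rewrite /embed tens_mx_scalar scale1r cf_castE.
by rewrite ?(cf_tl, cf_tr, cf_cf); try dims.
Qed.


End Embed.

Section LA.
Variable C : numClosedFieldType.
Implicit Types (n : nat).

Lemma adjM m n p (A : 'M[C]_(m,n)) (B : 'M[C]_(n,p)) : (A *m B)^t* = B^t* *m A^t*.
Proof. by rewrite trmx_mul map_mxM. Qed.

Lemma adjD m n (A B : 'M[C]_(m,n)) : (A + B)^t* = A^t* + B^t*.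
Proof. by rewrite linearD /= map_mxD. Qed.

Lemma adjN m n (A : 'M[C]_(m,n)) : (- A)^t* = - A^t*.
Proof. by rewrite linearN /= map_mxN. Qed.

Lemma adjB m n (A B : 'M[C]_(m,n)) : (A - B)^t* = A^t* - B^t*.
Proof. by rewrite adjD adjN. Qed.

Lemma adjZ m n a (A : 'M[C]_(m,n)) : (a *: A)^t* = a^* *: A^t*.
Proof. by rewrite linearZ /= map_mxZ. Qed.

Lemma adj1 n : (1%:M : 'M[C]_n)^t* = 1%:M.
Proof. by rewrite trmx1 map_mx1. Qed.

Lemma adj0 m n : (0 : 'M[C]_(m,n))^t* = 0.
Proof. by rewrite trmx0 map_mx0. Qed.

Lemma dot_mulr n (u v : 'rV[C]_n) (A : 'M[C]_n) :
  dotmx (u *m A) v = dotmx u (v *m A^t*).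
Proof. by rewrite !dotmxE adjM trmxCK mulmxA. Qed.

Lemma dotC n (u v : 'rV[C]_n) : dotmx u v = (dotmx v u)^*.
Proof.
rewrite !dotmxE; have -> : u *m v^t* = (v *m u^t*)^t* by rewrite adjM trmxCK.
by rewrite !mxE.
Qed.

Lemma dotDl n (u w v : 'rV[C]_n) : dotmx (u + w) v = dotmx u v + dotmx w v.
Proof. by rewrite !dotmxE mulmxDl mxE. Qed.

Lemma dotDr n (u w v : 'rV[C]_n) : dotmx v (u + w) = dotmx v u + dotmx v w.
Proof. by rewrite !dotmxE adjD mulmxDr mxE. Qed.

Lemma dotNl n (u v : 'rV[C]_n) : dotmx (- u) v = - dotmx u v.
Proof. by rewrite !dotmxE mulNmx mxE. Qed.

Lemma dotNr n (u v : 'rV[C]_n) : dotmx v (- u) = - dotmx v u.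
Proof. by rewrite !dotmxE adjN mulmxN mxE. Qed.

Lemma dotBl n (u w v : 'rV[C]_n) : dotmx (u - w) v = dotmx u v - dotmx w v.
Proof. by rewrite dotDl dotNl. Qed.

Lemma dotBr n (u w v : 'rV[C]_n) : dotmx v (u - w) = dotmx v u - dotmx v w.
Proof. by rewrite dotDr dotNr. Qed.

Lemma dotZl n a (u v : 'rV[C]_n) : dotmx (a *: u) v = a * dotmx u v.
Proof. by rewrite !dotmxE -scalemxAl mxE. Qed.

Lemma dotZr n a (u v : 'rV[C]_n) : dotmx v (a *: u) = a^* * dotmx v u.
Proof. by rewrite !dotmxE adjZ -scalemxAr mxE. Qed.

Lemma dot0l n (v : 'rV[C]_n) : dotmx 0 v = 0.
Proof. by rewrite dotmxE mul0mx mxE. Qed.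

Lemma dot0r n (v : 'rV[C]_n) : dotmx v 0 = 0.
Proof. by rewrite dotmxE adj0 mulmx0 mxE. Qed.

Lemma nrm_ge0 n (v : 'rV[C]_n) : 0 <= dotmx v v.
Proof. exact: (dnorm_ge0 (@dotmx C n)). Qed.

Lemma nrm_eq0 n (v : 'rV[C]_n) : (dotmx v v == 0) = (v == 0).
Proof. exact: (dnorm_eq0 (@dotmx C n)). Qed.

Lemma dot_eq0 n (u : 'rV[C]_n) : (forall v, dotmx u v = 0) -> u = 0.
Proof. by move=> H; apply/eqP; rewrite -nrm_eq0 H. Qed.

Lemma mx_eqv m n (A B : 'M[C]_(m,n)) : (forall u : 'rV_m, u *m A = u *m B) -> A = B.
Proof. by move=> H; apply/row_matrixP => i; rewrite !rowE H. Qed.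

Definition herm n (A : 'M[C]_n) := (A ^t* ) = A.
Definition psd n (A : 'M[C]_n) := forall v : 'rV_n, 0 <= dotmx (v *m A) v.
Arguments herm {n}.
Arguments psd {n}.

Lemma herm_dot n (A : 'M[C]_n) (u v : 'rV_n) : herm A ->
  dotmx (u *m A) v = dotmx u (v *m A).
Proof. by move=> hA; rewrite dot_mulr hA. Qed.

(* polarization: psd implies hermitian *)
Lemma psd_herm n (A : 'M[C]_n) : psd A -> herm A.
Proof.
move=> pA.
pose f u v := dotmx (u *m A) v.
have fr : forall v, (f v v)^* = f v v.
  by move=> v; apply: conj_Creal; apply: ger0_real; apply: pA.
have fexp : forall u v (c : C), f (u + c *: v) (u + c *: v) =
   f u u + c^* * f u v + c * f v u + c * c^* * f v v.
  move=> u v c; rewrite /f mulmxDl -scalemxAl dotDl !dotDr !dotZl !dotZr.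
  ring.
have key : forall u v, (f u v)^* = f v u.
  move=> u v.
  set a := f u v; set b := f v u; set x := f u u; set y := f v v.
  have H1 := fr (u + 1 *: v); rewrite fexp -/a -/b -/x -/y conjC1 in H1.
  have H2 := fr (u + 'i *: v); rewrite fexp -/a -/b -/x -/y conjCi in H2.
  rewrite !(rmorphD, rmorphM, rmorphN) /= ?conjC1 ?conjCi ?opprK (fr u) (fr v) -/x -/y in H1 H2.
  have E1 : a^* + b^* = a + b.
    have -> : a^* + b^* = (x + 1 * a^* + 1 * b^* + 1 * 1 * y) - x - y by ring.
    rewrite H1; ring.
  have E2 : 'i * (b + b^* - a - a^*) = 0.
    have -> : 'i * (b + b^* - a - a^*) =
      (x + - 'i * a + 'i * b + 'i * - 'i * y) - (x + 'i * a^* + - 'i * b^* + - 'i * 'i * y) by ring.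
    by rewrite H2 subrr.
  move/eqP: E2; rewrite mulf_eq0 (negbTE (neq0Ci C)) /= => /eqP E2.
  have : 2%:R * (b - a^*) = 0.
    have -> : 2%:R * (b - a^*) = (b + b^* - a - a^*) - (a^* + b^* - (a + b)) by ring.
    by rewrite E2 E1 subrr subr0.
  move/eqP; rewrite mulf_eq0 pnatr_eq0 /= subr_eq0 => /eqP ->.
  done.
apply: mx_eqv => u; apply/eqP; rewrite -subr_eq0; apply/eqP/dot_eq0 => v.
rewrite dotBl dot_mulr trmxCK.
have -> : dotmx u (v *m A) = (f v u)^* by rewrite /f dotC.
by rewrite key /f subrr.
Qed.

Lemma dot_suml n k (F : 'I_k -> 'rV[C]_n) v :
  dotmx (\sum_(i < k) F i) v = \sum_(i < k) dotmx (F i) v.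
Proof.
by elim/big_ind2: _ => [|x1 x2 y1 y2 <- <-|//]; rewrite ?dot0l ?dotDl.
Qed.

Lemma spec n (A : 'M[C]_n) : herm A -> exists (P : 'M[C]_n) (D : 'rV[C]_n),
  [/\ P *m P^t* = 1%:M, P^t* *m P = 1%:M, A = P^t* *m diag_mx D *m P
    & forall i j, dotmx (row i P) (row j P) = (i == j)%:R].
Proof.
move=> hA.
have nA : A \is normalmx by apply/normalmxP; rewrite hA.
have eA := orthomx_spectralP nA.
have uP := spectral_unitarymx A.
exists (spectralmx A), (spectral_diag A); split.
- exact/unitarymxP.
- by apply: mulmx1C; apply/unitarymxP.
- by rewrite {1}eA invmx_unitary.
- exact/row_unitarymxP.
Qed.

Lemma spec_row n (A P : 'M[C]_n) (D : 'rV[C]_n) k :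
  P *m P^t* = 1%:M -> A = P^t* *m diag_mx D *m P ->
  row k P *m A = D 0 k *: row k P.
Proof.
move=> u eA; rewrite eA !mulmxA rowE -(mulmxA _ P) u mulmx1.
by rewrite -rowE row_diag_mx -scalemxAl -rowE.
Qed.

Lemma psd_gram n (A : 'M[C]_n) : psd A -> exists Y : 'M[C]_n, A = Y^t* *m Y.
Proof.
move=> pA; have [P [D [u1 u2 eA orth]]] := spec (psd_herm pA).
have D0 : forall k, 0 <= D 0 k.
  move=> k; have := pA (row k P); rewrite (spec_row k u1 eA) dotZl orth eqxx mulr1.
  by [].
pose S := diag_mx (\row_k sqrtC (D 0 k)).
exists (S *m P).
have SS : S^t* = S.
  apply/matrixP => i j; rewrite !mxE; case: (eqVneq i j) => [->|ne].
    by rewrite !mulr1n (conj_Creal (sqrtC_real (D0 j))).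
  by rewrite !mulr0n conjC0.
rewrite eA; have -> : diag_mx D = S^t* *m S.
  rewrite SS /S mulmx_diag; congr diag_mx.
  by apply/rowP => k; rewrite !mxE -expr2 sqrtCK.
by rewrite adjM !mulmxA.
Qed.

Lemma psd_zero n (A : 'M[C]_n) (v : 'rV[C]_n) : psd A -> dotmx (v *m A) v = 0 -> v *m A = 0.
Proof.
move=> /psd_gram [Y ->]; rewrite mulmxA dot_mulr => /eqP; rewrite nrm_eq0 => /eqP ->.
by rewrite mul0mx.
Qed.

Lemma psd_add n (A B : 'M[C]_n) : psd A -> psd B -> psd (A + B).
Proof. by move=> pA pB v; rewrite mulmxDr dotDl addr_ge0. Qed.

Lemma psd_sum n k (F : 'I_k -> 'M[C]_n) : (forall i, psd (F i)) -> psd (\sum_(i < k) F i).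
Proof.
move=> pF v; rewrite mulmx_sumr dot_suml; apply: sumr_ge0 => i _; exact: pF.
Qed.

Lemma ker_sum n k (F : 'I_k -> 'M[C]_n) (v : 'rV[C]_n) : (forall i, psd (F i)) ->
  v *m (\sum_(i < k) F i) = 0 -> forall i, v *m F i = 0.
Proof.
move=> pF H i; apply: psd_zero => //.
have : dotmx (v *m \sum_(i < k) F i) v = 0 by rewrite H dot0l.
rewrite mulmx_sumr dot_suml => H2.
by apply: (psumr_eq0P _ H2) => // j _; apply: pF.
Qed.

Lemma ker_sum_iff n k (F : 'I_k -> 'M[C]_n) (v : 'rV[C]_n) : (forall i, psd (F i)) ->
  (v *m (\sum_(i < k) F i) = 0) <-> (forall i, v *m F i = 0).
Proof.
move=> pF; split; first exact: ker_sum.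
by move=> H; rewrite mulmx_sumr big1.
Qed.

Lemma ker_add n (A B : 'M[C]_n) (v : 'rV[C]_n) : psd A -> psd B ->
  v *m (A + B) = 0 -> v *m A = 0 /\ v *m B = 0.
Proof.
move=> pA pB H.
have : dotmx (v *m (A + B)) v = 0 by rewrite H dot0l.
rewrite mulmxDr dotDl => /eqP; rewrite paddr_eq0 // => /andP [/eqP a /eqP b].
by split; apply: psd_zero.
Qed.

Lemma ortho_dot m n (U : 'M[C]_(m,n)) (x y : 'rV_n) :
  (x <= U)%MS -> (y *m U^t* = 0) -> dotmx y x = 0.
Proof.
move=> xU yU; rewrite dotmxE -(mulmxKpV xU) adjM mulmxA yU mul0mx mxE //.
Qed.

Lemma pr_idem m n (U : 'M[C]_(m,n)) : proj_ortho U *m proj_ortho U = proj_ortho U.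
Proof. exact: proj_ortho_proj. Qed.

Lemma pr_orth m n (U : 'M[C]_(m,n)) (v : 'rV_n) :
  (v - v *m proj_ortho U) *m U^t* = 0.
Proof. by apply/orthomx1P; apply: proj_ortho_compl_sub. Qed.

Lemma pr_herm m n (U : 'M[C]_(m,n)) : herm (proj_ortho U).
Proof.
set Pr := proj_ortho U.
have key : forall u v : 'rV_n, dotmx (u *m Pr) v = dotmx (u *m Pr) (v *m Pr).
  move=> u v; rewrite -[v in LHS](subrK (v *m Pr)) dotDr.
  rewrite dotC (ortho_dot (proj_ortho_sub _ _) (pr_orth _ _)).
  by rewrite conjC0 add0r.
have key2 : forall u v : 'rV_n, dotmx u (v *m Pr) = dotmx (u *m Pr) (v *m Pr).
  move=> u v; rewrite -[u in LHS](subrK (u *m Pr)) dotDl.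
  by rewrite (ortho_dot (proj_ortho_sub _ _) (pr_orth _ _)) add0r.
apply/esym/mx_eqv => u; apply/eqP; rewrite -subr_eq0; apply/eqP/dot_eq0 => v.
by rewrite dotBl (dot_mulr u v (Pr^t* )) trmxCK key2 key subrr.
Qed.

Lemma pr_fix m n (U : 'M[C]_(m,n)) (v : 'rV_n) :
  (v *m proj_ortho U = v) <-> (v <= U)%MS.
Proof.
split; last exact: proj_ortho_id.
by move=> <-; apply: proj_ortho_sub.
Qed.

Lemma ker_pr n (X : 'M[C]_n) : herm X ->
  proj_ortho (kermx X) *m X = 0 /\
  exists Z : 'M[C]_n, 1%:M - proj_ortho (kermx X) = X *m Z.
Proof.
move=> hX; set Pr := proj_ortho (kermx X); split.
  by apply/sub_kermxP; rewrite -[Pr]mul1mx; apply: proj_ortho_sub.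
set Y := 1%:M - Pr.
have sY : (Y <= orthomx Num.Def.conjC (hermitian1mx n) (kermx X))%MS.
  by have := proj_ortho_compl_sub (kermx X) (1%:M : 'M[C]_n); rewrite mul1mx.
have sXO : (X <= orthomx Num.Def.conjC (hermitian1mx n) (kermx X))%MS.
  apply/orthomx1P.
  by rewrite -{1}hX -adjM (sub_kermxP (submx_refl _)) adj0.
have sOX : (orthomx Num.Def.conjC (hermitian1mx n) (kermx X) <= X)%MS.
  have [_ <-] := mxrank_leqif_sup sXO.
  by rewrite rank_ortho mxrank_ker subKn ?rank_leq_col.
have sYX := submx_trans sY sOX.
exists ((Y *m pinvmx X)^t* ).
have hY : herm Y by rewrite /herm /Y adjB adj1 pr_herm.
by rewrite -{1}hY -{1}(mulmxKpV sYX) adjM hX.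
Qed.

Lemma eig_real n (K : 'M[C]_n) (v : 'rV[C]_n) mu : herm K -> v != 0 -> v *m K = mu *: v -> mu^* = mu.
Proof.
move=> hK v0 e.
have := herm_dot v v hK; rewrite e dotZl dotZr => /eqP.
rewrite -subr_eq0 -mulrBl mulf_eq0 nrm_eq0 (negbTE v0) orbF subr_eq0 => /eqP.
by move=> H; rewrite -H.
Qed.

Lemma pyth n (P : 'M[C]_n) (v : 'rV[C]_n) : herm P -> P *m P = P ->
  dotmx v v = dotmx (v *m P) (v *m P) + dotmx (v - v *m P) (v - v *m P).
Proof.
move=> hP iP.
have c0 : dotmx (v *m P) (v - v *m P) = 0.
  by rewrite herm_dot // mulmxBl -mulmxA iP subrr dot0r.
have gen : forall z w : 'rV[C]_n, dotmx w z = 0 ->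
    dotmx (z + w) (z + w) = dotmx w w + dotmx z z.
  move=> z w h; rewrite dotDl !dotDr. have h2 : dotmx z w = 0 by rewrite dotC h conjC0.
  by rewrite h2 h addr0 add0r addrC.
by rewrite -{1 2}[v](subrK (v *m P)) (gen _ _ c0).
Qed.

Section TwoProj.
Variables (n : nat) (P Q : 'M[C]_n).
Hypotheses (hP : herm P) (hQ : herm Q) (iP : P *m P = P) (iQ : Q *m Q = Q).

Lemma rayleigh (v : 'rV[C]_n) :
  dotmx (v *m (P *m Q *m P)) v = dotmx (v *m P *m Q) (v *m P *m Q).
Proof.
rewrite !mulmxA (herm_dot (v *m P *m Q) v hP) -[in LHS]iQ mulmxA.
by rewrite (herm_dot (v *m P *m Q) (v *m P) hQ).
Qed.

Lemma rayleigh_le (v : 'rV[C]_n) :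
  dotmx (v *m (P *m Q *m P)) v <= dotmx v v.
Proof.
rewrite rayleigh (pyth v hP iP) (pyth (v *m P) hQ iQ) -addrA lerDl.
by rewrite addr_ge0 ?nrm_ge0.
Qed.

Lemma rayleigh_ge0 (v : 'rV[C]_n) : 0 <= dotmx (v *m (P *m Q *m P)) v.
Proof. by rewrite rayleigh nrm_ge0. Qed.

Lemma K_herm : herm (P *m Q *m P).
Proof. by rewrite /herm !adjM hP hQ mulmxA. Qed.

Lemma K_fix (v : 'rV[C]_n) : v *m (P *m Q *m P) = v <-> v *m P = v /\ v *m Q = v.
Proof.
split; last first.
  by move=> [e1 e2]; rewrite !mulmxA e1 e2 e1.
move=> e.
have h1 := pyth v hP iP.
have h2 := pyth (v *m P) hQ iQ.
have h3 := rayleigh v; rewrite e in h3.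
have : dotmx (v *m P - v *m P *m Q) (v *m P - v *m P *m Q) +
       dotmx (v - v *m P) (v - v *m P) = 0.
  have := h1; rewrite h2 h3 -addrA => H.
  by apply: (@addrI _ (dotmx (v *m P *m Q) (v *m P *m Q))); rewrite addr0 -H.
move=> /eqP; rewrite paddr_eq0 ?nrm_ge0 // !nrm_eq0 !subr_eq0 => /andP [/eqP a /eqP b].
by split; [rewrite -b | rewrite {1}b -a -b].
Qed.

End TwoProj.

Lemma row_nz n (P : 'M[C]_n) k : (forall i j, dotmx (row i P) (row j P) = (i == j)%:R) ->
  row k P != 0.
Proof.
move=> orth; apply/negP => /eqP r0.
by have := orth k k; rewrite r0 dot0l eqxx => /eqP; rewrite eq_sym oner_eq0.
Qed.

Lemma spec_bound n (K : 'M[C]_n) (psi : 'rV[C]_n) lam : herm K ->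
  (forall (r : 'rV[C]_n) mu, r != 0 -> r *m K = mu *: r -> dotmx psi r != 0 -> mu <= lam) ->
  dotmx (psi *m K) psi <= lam * dotmx psi psi.
Proof.
move=> hK H; have [P [D [u1 u2 eK orth]]] := spec hK.
have e1 : dotmx (psi *m K) psi = dotmx (psi *m P^t* *m diag_mx D) (psi *m P^t* ).
  by rewrite eK !mulmxA dot_mulr.
have e2 : dotmx psi psi = dotmx (psi *m P^t* ) (psi *m P^t* ).
  by rewrite dot_mulr trmxCK -mulmxA u2 mulmx1.
set w := psi *m P^t* in e1 e2.
have e3 : forall k, dotmx psi (row k P) = w 0 k.
  by move=> k; rewrite dotmxE !mxE; apply: eq_bigr => j _; rewrite !mxE.
clearbody w.
rewrite e1 e2 mul_mx_diag !dotmxE !mxE mulr_sumr; apply: ler_sum => k _; rewrite !mxE.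
case: (eqVneq (w 0 k) 0) => [->|nz]; first by rewrite !mul0r mulr0.
have Dk : D 0 k <= lam.
  apply: (H (row k P)); first exact: row_nz.
    exact: spec_row u1 eK.
  by rewrite e3.
rewrite mulrAC [lam * _]mulrC; apply: ler_wpM2l => //; exact: mul_conjC_ge0.
Qed.

Lemma eig_diag n (K P : 'M[C]_n) (D : 'rV[C]_n) (r : 'rV[C]_n) mu :
  P *m P^t* = 1%:M -> P^t* *m P = 1%:M -> K = P^t* *m diag_mx D *m P ->
  r != 0 -> r *m K = mu *: r -> exists k, mu = D 0 k.
Proof.
move=> u1 u2 eK rnz e.
set w := r *m P^t*.
have wnz : w != 0.
  apply: contraNneq rnz => w0.
  by rewrite -[r]mulmx1 -u2 mulmxA -/w w0 mul0mx.
have ew : w *m diag_mx D = mu *: w.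
  have : r *m K *m P^t* = mu *: w by rewrite e -scalemxAl.
  by rewrite eK !mulmxA -(mulmxA _ P) u1 mulmx1.
clearbody w.
case: (pickP (fun k => w 0 k != 0)) => [k /= nz|none]; last first.
  case/negP: wnz; apply/eqP/rowP => k; rewrite mxE; apply/eqP; exact: (negbFE (none k)).
exists k.
have /matrixP /(_ 0 k) := ew; rewrite mul_mx_diag !mxE => h.
by apply: (mulfI nz); rewrite h mulrC.
Qed.

Lemma max_real (s : seq C) (p : pred C) : all (fun x => x \is Num.real) s -> has p s ->
  exists2 x, x \in s & p x /\ (forall y, y \in s -> p y -> y <= x).
Proof.
elim: s => [//|a s IH] /= /andP [ra rs] hp.
case pa: (p a); last first.
  rewrite pa /= in hp; have [x xs [px mx]] := IH rs hp.
  exists x; first by rewrite in_cons xs orbT.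
  split=> // y; rewrite in_cons => /orP [/eqP ->|ys]; first by rewrite pa.
  exact: mx.
case hs: (has p s); last first.
  exists a; first by rewrite mem_head.
  split=> // y; rewrite in_cons => /orP [/eqP -> //|ys py].
  by move/hasPn: (negbT hs) => /(_ y ys); rewrite py.
have [x xs [px mx]] := IH rs hs.
have rx : x \is Num.real by move/allP: rs => /(_ x xs).
case/orP: (real_leVge ra rx) => ax.
  exists x; first by rewrite in_cons xs orbT.
  split=> // y; rewrite in_cons => /orP [/eqP -> //|ys]; exact: mx.
exists a; first by rewrite mem_head.
split=> // y; rewrite in_cons => /orP [/eqP -> //|ys py].
exact: le_trans (mx y ys py) ax.
Qed.

Lemma exists_largest n (K : 'M[C]_n) : herm K ->
  (exists2 mu, eigenvalue K mu & mu < 1) ->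
  exists lam, [/\ eigenvalue K lam, lam < 1 &
      forall mu, eigenvalue K mu -> mu < 1 -> mu <= lam].
Proof.
move=> hK [mu0 emu0 lt0].
have [P [D [u1 u2 eK orth]]] := spec hK.
have eigk : forall k, eigenvalue K (D 0 k).
  by move=> k; apply/eigenvalueP; exists (row k P); [exact: spec_row | exact: row_nz].
have ofeig : forall mu, eigenvalue K mu -> exists k, mu = D 0 k.
  by move=> mu /eigenvalueP [r er rnz]; exact: eig_diag u1 u2 eK rnz er.
set s := [seq D 0 k | k <- enum 'I_n].
have rs : all (fun x => x \is Num.real) s.
  apply/allP => x /mapP [k _ ->]; rewrite CrealE; apply/eqP.
  exact: (eig_real hK (row_nz k orth) (spec_row k u1 eK)).
have hs : has (fun z => z < 1) s.
  have [k ek] := ofeig _ emu0; apply/hasP; exists (D 0 k); last by rewrite -ek.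
  by apply/mapP; exists k; rewrite ?mem_enum.
have [x /mapP [k _ ->] [px mx]] := max_real rs hs.
exists (D 0 k); split => // mu emu lmu.
have [k' ek'] := ofeig _ emu; rewrite ek' in lmu *; apply: mx => //.
by apply/mapP; exists k'; rewrite ?mem_enum.
Qed.

End LA.

Section Chain.
Variables (R : realType) (d : nat) (h : 'M[R[i]]_(d ^ 2)).
Local Notation C := (R[i]).
Hypothesis hpsd : psd h.

Lemma E_psd a k b N (X : 'M[C]_(d ^ k)) : (a + k + b = N)%N -> psd X -> psd (embed a k b N X).
Proof.
move=> e /psd_gram [Y ->] v.
rewrite (E_mul _ _ e) (E_adj _ e) mulmxA dot_mulr; exact: nrm_ge0.
Qed.

Lemma E_herm a k b N (X : 'M[C]_(d ^ k)) : (a + k + b = N)%N -> herm X -> herm (embed a k b N X).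
Proof. by move=> e hX; rewrite /herm -(E_adj _ e) hX. Qed.

Lemma Ham_psd L : psd (Ham h L).
Proof.
apply: psd_sum => x; apply: E_psd; last exact: hpsd.
have := ltn_ord x; lia.
Qed.

Lemma Ham_herm L : herm (Ham h L).
Proof. by apply: psd_herm; exact: Ham_psd. Qed.

Lemma EP a k b N (X : 'M[C]_(d ^ k)) (v : 'rV[C]_(d ^ N)) : (a + k + b = N)%N -> herm X ->
  v *m embed a k b N X = 0 <-> v *m embed a k b N (proj_ortho (kermx X)) = v.
Proof.
move=> e hX; have [h1 [Z hZ]] := ker_pr hX; split => H.
  have : v *m embed a k b N (1%:M - proj_ortho (kermx X)) = 0.
    by rewrite hZ (E_mul _ _ e) mulmxA H mul0mx.
  by rewrite (E_sub _ _ e) (E_1 R d e) mulmxBr mulmx1 => /eqP; rewrite subr_eq0 => /eqP <-.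
by rewrite -H -mulmxA -(E_mul _ _ e) h1 E_0 mulmx0.
Qed.

Lemma Gproj_herm L : herm (Gproj h L).
Proof. exact: pr_herm. Qed.

Lemma Gproj_idem L : Gproj h L *m Gproj h L = Gproj h L.
Proof. exact: pr_idem. Qed.

Lemma EPG a k b N (v : 'rV[C]_(d ^ N)) : (a + k + b = N)%N ->
  v *m embed a k b N (Ham h k) = 0 <-> v *m embed a k b N (Gproj h k) = v.
Proof. move=> e; exact: EP e (Ham_herm k). Qed.

Lemma EG_herm a k b N : (a + k + b = N)%N -> herm (embed a k b N (Gproj h k)).
Proof. by move=> e; apply: E_herm; [exact: e | exact: Gproj_herm]. Qed.

Lemma EG_idem a k b N : (a + k + b = N)%N ->
  embed a k b N (Gproj h k) *m embed a k b N (Gproj h k) = embed a k b N (Gproj h k).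
Proof. by move=> e; rewrite -(E_mul _ _ e) Gproj_idem. Qed.

Definition T N x := embed x 2 (N - x - 2) N h.

Lemma T_psd N x : (x + 2 <= N)%N -> psd (T N x).
Proof. by move=> le; apply: E_psd; [lia | exact: hpsd]. Qed.

Lemma ker_Ham N (v : 'rV[C]_(d ^ N)) :
  v *m Ham h N = 0 <-> forall x, (x < N.-1)%N -> v *m T N x = 0.
Proof.
rewrite /Ham ker_sum_iff; last first.
  move=> x; apply: E_psd; last exact: hpsd; have := ltn_ord x; lia.
split => H x.
  by move=> lt; have := H (Ordinal lt).
exact: H (ltn_ord x).
Qed.

Lemma ker_EHam a k b N (v : 'rV[C]_(d ^ N)) : (a + k + b = N)%N ->
  v *m embed a k b N (Ham h k) = 0 <-> forall x, (x < k.-1)%N -> v *m T N (a + x) = 0.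
Proof.
move=> e; rewrite /Ham (E_sum _ e) ker_sum_iff; last first.
  move=> x; apply: (E_psd e); apply: E_psd; last exact: hpsd; have := ltn_ord x; lia.
have eq : forall x : 'I_k.-1, embed a k b N (embed x 2 (k - x - 2) k h) = T N (a + x).
  move=> x; rewrite /T; apply: E_comp; first exact: e; have := ltn_ord x; lia.
split => H x.
  by move=> lt; have := H (Ordinal lt); rewrite eq.
by rewrite eq; exact: H (ltn_ord x).
Qed.

End Chain.

Section Main.
Variables (R : realType) (d : nat) (h : 'M[R[i]]_(d ^ 2)).
Local Notation C := (R[i]).
Hypothesis hpsd : psd h.
Variables (m n : nat).
Hypotheses (hm : (0 < m)%N) (hn : (0 < n)%N).
Local Notation N := (m + n + 1)%N.
Local Notation P := (G_left h m n).
Local Notation Q := (G_right h m n).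
Local Notation Q' := (embed m.+1 n 0 (m + n + 1) (Gproj h n)).

Lemma P_herm : herm P. Proof. by apply: EG_herm; lia. Qed.
Lemma Q_herm : herm Q. Proof. by apply: EG_herm; lia. Qed.
Lemma Q'_herm : herm Q'. Proof. by apply: EG_herm; lia. Qed.
Lemma P_idem : P *m P = P. Proof. by apply: EG_idem; lia. Qed.
Lemma Q_idem : Q *m Q = Q. Proof. by apply: EG_idem; lia. Qed.

Lemma P_fix (v : 'rV[C]_(d ^ N)) :
  v *m P = v <-> forall x, (x < m)%N -> v *m T h N x = 0.
Proof.
have e : (0 + m.+1 + n = N)%N by lia.
by rewrite /G_left -(EPG hpsd v e) (ker_EHam hpsd v e).
Qed.

Lemma Q_fix (v : 'rV[C]_(d ^ N)) :
  v *m Q = v <-> forall x, (x < n)%N -> v *m T h N (m + x) = 0.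
Proof.
have e : (m + n.+1 + 0 = N)%N by lia.
by rewrite /G_right -(EPG hpsd v e) (ker_EHam hpsd v e).
Qed.

Lemma Q'_fix (v : 'rV[C]_(d ^ N)) :
  v *m Q' = v <-> forall x, (x < n.-1)%N -> v *m T h N (m.+1 + x) = 0.
Proof.
have e : (m.+1 + n + 0 = N)%N by lia.
by rewrite -(EPG hpsd v e) (ker_EHam hpsd v e).
Qed.

Lemma G_mem (v : 'rV[C]_(d ^ N)) :
  (v <= Gspace h N)%MS <-> v *m P = v /\ v *m Q = v.
Proof.
rewrite P_fix Q_fix; split.
  move/sub_kermxP/(ker_Ham hpsd) => H; split => x lt; apply: H; rewrite addn1 /=; lia.
move=> [H1 H2]; apply/sub_kermxP/(ker_Ham hpsd) => x lt.
have {lt} lt : (x < m + n)%N by move: lt; rewrite addn1.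
case: (ltnP x m) => xm; first exact: H1.
have -> : x = (m + (x - m))%N by lia.
apply: H2; lia.
Qed.

Lemma K_fixG (v : 'rV[C]_(d ^ N)) : v *m Kop h m n = v <-> (v <= Gspace h N)%MS.
Proof.
rewrite G_mem /Kop; apply: K_fix.
- exact: P_herm.
- exact: Q_herm.
- exact: P_idem.
- exact: Q_idem.
Qed.

Lemma K_herm' : herm (Kop h m n).
Proof. apply: K_herm; [exact: P_herm | exact: Q_herm]. Qed.

Lemma part2 : (eigenspace (Kop h m n) 1 == Gspace h N)%MS.
Proof.
have H : forall v : 'rV[C]_(d ^ N), (v <= eigenspace (Kop h m n) 1)%MS = (v <= Gspace h N)%MS.
  move=> v; apply/idP/idP.
    by move/eigenspaceP; rewrite scale1r => /K_fixG.
  by move/K_fixG => e; apply/eigenspaceP; rewrite scale1r.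
apply/andP; split; apply/row_subP => i; [rewrite -H | rewrite H]; exact: row_sub.
Qed.

Lemma part1 : (Kop h m n <= tens_sp (m + n + 1) (Gspace h m.+1) (Gspace h n))%MS.
Proof.
set W := conform_mx (0 : 'M[C]_(d ^ N)) (Gproj h m.+1 *t Gproj h n).
have eP : P = conform_mx 0 (Gproj h m.+1 *t (1%:M : 'M[C]_(d ^ n))).
  have e : (m.+1 + n = N)%N by lia.
  by rewrite /G_left (E_left _ e).
have eQ' : Q' = conform_mx 0 ((1%:M : 'M[C]_(d ^ m.+1)) *t Gproj h n).
  have e : (m.+1 + n = N)%N by lia.
  by rewrite (E_right _ e).
have PQ' : P *m Q' = W.
  rewrite eP eQ' -cf_mul; try dims.
  by rewrite tensmx_mul mulmx1 mul1mx.
have Q'P : Q' *m P = W.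
  rewrite eP eQ' -cf_mul; try dims.
  by rewrite tensmx_mul mulmx1 mul1mx.
have QQ' : Q *m Q' = Q.
  apply: mx_eqv => u; rewrite mulmxA.
  have : (u *m Q) *m Q = u *m Q by rewrite -mulmxA Q_idem.
  move/Q_fix => H; apply/Q'_fix => x lt.
  have -> : (m.+1 + x = m + x.+1)%N by lia.
  by apply: H; lia.
have KW : Kop h m n *m W = Kop h m n.
  rewrite -PQ' /Kop !mulmxA -[P *m Q *m P *m P]mulmxA P_idem.
  by rewrite -mulmxA PQ' -Q'P mulmxA -(mulmxA P Q Q') QQ'.
have sW : (W <= tens_sp N (Gspace h m.+1) (Gspace h n))%MS.
  rewrite /tens_sp /W; apply: cf_sub; try dims.
  by apply: tens_sub; rewrite -[Gproj _ _]mul1mx; apply: proj_ortho_sub.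
by rewrite -KW; exact: submx_trans (submxMl _ _) sW.
Qed.

Local Notation KK := (P *m Q *m P).

Lemma KKE : Kop h m n = KK. Proof. by []. Qed.

Lemma part4 : (0 < d)%N -> h != 0 ->
  exists lam, [/\ eigenvalue (Kop h m n) lam, lam < 1 &
      forall mu, eigenvalue (Kop h m n) mu -> mu < 1 -> mu <= lam].
Proof.
move=> d0 hnz.
have P1 : 1%:M - P != 0.
  apply/negP => /eqP P1; apply: (negP hnz); apply/eqP.
  have eP : P = 1%:M by apply/eqP; rewrite eq_sym -subr_eq0 P1.
  have T0 : T h N 0 = 0.
    apply: mx_eqv => u; rewrite mulmx0.
    have : u *m P = u by rewrite eP mulmx1.
    by move/P_fix => H; exact: H 0%N hm.
  apply: (@E_inj R d 0 2 (N - 0 - 2) N h d0) => //; lia.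
have [v sv vnz] := rowV0Pn P1.
have vP : v *m P = 0.
  by rewrite -(mulmxKpV sv) -mulmxA mulmxBl mul1mx P_idem subrr mulmx0.
apply: exists_largest; first exact: K_herm'.
exists 0; last exact: ltr01.
apply/eigenvalueP; exists v => //.
by rewrite KKE !mulmxA vP !mul0mx scale0r.
Qed.

Lemma re_real (z : C) : 0 <= z -> z = (complex.Re z)%:C%C.
Proof. by case: z => a b; rewrite lecE /= => /andP [/eqP -> _]. Qed.

Lemma QK (psi : 'rV[C]_(d ^ N)) : psi *m P = psi ->
  dotmx (psi *m Q) psi = dotmx (psi *m KK) psi.
Proof. by move=> psiP; rewrite !mulmxA (herm_dot _ _ P_herm) psiP. Qed.

Lemma part3 (lam : C) : largest_eig_below1 (Kop h m n) lam -> ((eps h m n)%:C)%C = lam.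
Proof.
rewrite KKE => -[elam lt1 maxl].
have hK : herm KK := K_herm'.
have [v0 ev0 v0nz] := eigenvalueP elam.
have npos : 0 < dotmx v0 v0 by rewrite lt_def nrm_eq0 v0nz nrm_ge0.
have lam0 : 0 <= lam.
  have := rayleigh_ge0 P_herm Q_herm Q_idem v0.
  by rewrite ev0 dotZl pmulr_lge0.
have lamR := re_real lam0.
set S := [set x : R | exists psi : 'rV[C]_(d ^ N),
         [/\ psi *m embed 0 m.+1 n N (Ham h m.+1) = 0,
             (forall phi : 'rV[C]_(d ^ N),
                 (phi <= Gspace h N)%MS -> dotmx psi phi = 0),
             dotmx psi psi = 1
           & (x%:C)%C = dotmx (psi *m Q) psi]]%classic.
have e0 : (0 + m.+1 + n = N)%N by lia.
have ub : forall x, S x -> 0 <= x /\ x <= complex.Re lam.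
  move=> x [psi [pL porth pn px]].
  have psiP : psi *m P = psi by apply/(EPG hpsd psi e0).
  rewrite -ler0c -lecR -lamR px (QK psiP); split; first exact: rayleigh_ge0 P_herm Q_herm Q_idem psi.
  rewrite -[lam]mulr1 -pn; apply: spec_bound => // r mu rnz er dnz.
  have rpos : 0 < dotmx r r by rewrite lt_def nrm_eq0 rnz nrm_ge0.
  have mu1 : mu <= 1.
    have := rayleigh_le P_herm Q_herm P_idem Q_idem r.
    by rewrite er dotZl -{2}[dotmx r r]mul1r ler_pM2r.
  have mun1 : mu != 1.
    apply: contraNneq dnz => e1; apply/eqP; apply: porth.
    by apply/K_fixG; rewrite KKE er e1 scale1r.
  apply: maxl; first by apply/eigenvalueP; exists r.
  by rewrite lt_neqAle mun1 mu1.
have -> : eps h m n = sup S by [].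
case: (eqVneq lam 0) => [l0|lnz].
  rewrite l0 /=; apply/eqP; rewrite eq_complex /= eqxx andbT; apply/eqP.
  have ub0 : forall x, S x -> x = 0.
    move=> x /ub [a b]; apply/le_anti; rewrite a andbT.
    by move: b; rewrite l0.
  case: (pselect (exists x, S x)) => [[x Sx]|nS].
    apply/le_anti/andP; split.
      by apply: ge_sup; [exists x | move=> y /ub0 ->].
    have := ub0 x Sx => x0.
    have hs : has_sup S by split; [exists x | exists 0 => y /ub0 ->].
    by rewrite -x0; apply: sup_upper_bound.
  rewrite (_ : S = set0) ?sup0 //.
  by apply/seteqP; split => y // Sy; apply: nS; exists y.
set c := (sqrtC (dotmx v0 v0))^-1.
have cpos : 0 < c by rewrite invr_gt0 sqrtC_gt0.
have cc : c^* = c by apply: conj_Creal; apply: gtr0_real.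
set psi0 := c *: v0.
have v0P : v0 *m P = v0.
  have e : v0 = lam^-1 *: (v0 *m KK) by rewrite ev0 scalerA mulVf ?scale1r.
  rewrite {1}e -scalemxAl -mulmxA -(mulmxA (P *m Q)) P_idem.
  by rewrite -e.
have psiP : psi0 *m P = psi0 by rewrite /psi0 -scalemxAl v0P.
have psiK : psi0 *m KK = lam *: psi0.
  by rewrite /psi0 -scalemxAl ev0 !scalerA mulrC.
have pn : dotmx psi0 psi0 = 1.
  rewrite dotZl dotZr cc mulrA -expr2 /c exprVn sqrtCK mulVf //.
  by rewrite lt0r_neq0.
have Slam : S (complex.Re lam).
  exists psi0; split.
  - by apply/(EPG hpsd psi0 e0).
  - move=> phi sphi.
    have phiK : phi *m KK = phi by apply/K_fixG.
    have : dotmx v0 phi = lam * dotmx v0 phi.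
      by rewrite -{1}phiK -(herm_dot _ _ hK) ev0 dotZl.
    move/eqP; rewrite -{1}[dotmx v0 phi]mul1r -subr_eq0 -mulrBl mulf_eq0.
    rewrite subr_eq0 eq_sym (lt_eqF lt1) /= => /eqP ez.
    by rewrite dotZl ez mulr0.
  - exact: pn.
  - by rewrite (QK psiP) psiK dotZl pn mulr1 -lamR.
have [_ lub] := ub _ Slam.
have -> : sup S = complex.Re lam.
  apply/le_anti/andP; split.
    by apply: ge_sup; [exists (complex.Re lam) | move=> y /ub []].
  have hs : has_sup S by split; [exists (complex.Re lam) | exists (complex.Re lam) => y /ub []].
  exact: sup_upper_bound.
by rewrite -lamR.
Qed.

End Main.

Local Close Scope sesquilinear_scope.
Unset Implicit Arguments.

Theorem lemma3p2 (R : realType) (d : nat) (h : 'M[R[i]]_(d ^ 2)) (m n : nat) :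
  positive_op h -> frustration_free h -> (0 < m)%N -> (0 < n)%N ->
  [/\ (Kop h m n <= tens_sp (m + n + 1) (Gspace h m.+1) (Gspace h n))%MS,
      (eigenspace (Kop h m n) 1 == Gspace h (m + n + 1))%MS,
      (forall lam : R[i], largest_eig_below1 (Kop h m n) lam ->
          ((eps h m n)%:C)%C = lam)
    & (h != 0 -> exists lam : R[i], largest_eig_below1 (Kop h m n) lam)].
Proof.
move=> hp ff hm hn.
have hpsd : psd h := hp.
have d0 : (0 < d)%N.
  rewrite lt0n; apply/negP => /eqP dz; move: (ff 1%N isT); apply/negP; rewrite negbK.
  apply/eqP/matrixP => i j; exfalso.
  move: (nat_of_ord i) (ltn_ord i) => k; rewrite dz expn1 ltn0 //.
split.
- exact: (part1 hpsd hm hn).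
- exact: (part2 hpsd hm hn).
- move=> lam; exact: (part3 hpsd hm hn).
- move=> hnz; exact: (part4 hpsd hm hn d0 hnz).
Qed.
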